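(* Let $U\subset\mathbb{C}$ be open, let $f:U\to\mathbb{C}^N$ be a nonconstant holomorphic map, and let $f_j=P_+^jf$ and $P_j$ be as in the context. Let $0\le k\le N-2$ and assume $f_0,\dots,f_k$ vanish nowhere on $U$. Consider the matrix-valued $1$-form on $U$ $$\omega_k=i\big(-[\partial P_k,P_k]\,d\xi+[\bar\partial P_k,P_k]\,d\bar\xi\big).$$ Then $$\omega_k=d\Big(-i\big(P_k+2\sum_{j=0}^{k-1}P_j\big)\Big)$$ (the sum being empty when $k=0$). Consequently the generalized Weierstrass immersion $X_k(\xi,\bar\xi)=\int_\gamma\omega_k$ (with $\gamma$ a curve in $U$ ending at $\xi$) is path-independent on simply connected $U$ and equals $$X_k(\xi,\bar\xi)=-i\Big(P_k+2\sum_{j=0}^{k-1}P_j\Big)$$ up to an additive constant matrix.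
   Context: Let $\xi$ be the complex coordinate on $\mathbb{C}$, $\partial=\partial/\partial\xi$, $\bar\partial=\partial/\partial\bar\xi$, and $[A,B]=AB-BA$. For a column vector $g\in\mathbb{C}^N$, $g^\dagger$ is its conjugate transpose. For a smooth map $g:U\to\mathbb{C}^N$ with $g^\dagger g\neq 0$ on $U$, define $$P_+g=\partial g-g\,\frac{g^\dagger\partial g}{g^\dagger g}.$$ Given a nonconstant holomorphic $f:U\to\mathbb{C}^N$ (i.e. $\bar\partial f=0$), set $f_0=f$ and $f_{j}=P_+ f_{j-1}=P_+^{j}f$ (defined as long as $f_{j-1}$ vanishes nowhere on $U$). For each $j$ with $f_j$ nowhere zero, define the rank-one Hermitian orthogonal projector $$P_j=\frac{f_j f_j^\dagger}{f_j^\dagger f_j}.$$ These projectors solve the $\mathbb{C}P^{N-1}$ sigma model equations $\partial[\bar\partial P_j,P_j]+\bar\partial[\partial P_j,P_j]=0$. *)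

(* Defs.v *)
From Stdlib Require Import Reals ClassicalEpsilon List.
Open Scope R_scope.

Record Cx : Type := mkC { re : R ; im : R }.

Definition C0 : Cx := mkC 0 0.
Definition CR (r : R) : Cx := mkC r 0.
Definition Ci : Cx := mkC 0 1.
Definition Cadd (z w : Cx) : Cx := mkC (re z + re w) (im z + im w).
Definition Copp (z : Cx) : Cx := mkC (- re z) (- im z).
Definition Csub (z w : Cx) : Cx := Cadd z (Copp w).
Definition Cmul (z w : Cx) : Cx :=
  mkC (re z * re w - im z * im w) (re z * im w + im z * re w).
Definition Cconj (z : Cx) : Cx := mkC (re z) (- im z).
Definition Cinv (z : Cx) : Cx :=
  mkC (re z / (re z * re z + im z * im z)) (- im z / (re z * re z + im z * im z)).
Definition Cdiv (z w : Cx) : Cx := Cmul z (Cinv w).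
Definition Cnorm (z : Cx) : R := sqrt (re z * re z + im z * im z).

Fixpoint Csum (n : nat) (F : nat -> Cx) : Cx :=
  match n with
  | O => C0
  | S m => Cadd (Csum m F) (F m)
  end.

(** * Vectors in Cx^N and N x N matrices (only indices < N are meaningful) *)
Definition Vec := nat -> Cx.
Definition Mat := nat -> nat -> Cx.

Definition inner (N : nat) (g h : Vec) : Cx :=
  Csum N (fun b => Cmul (Cconj (g b)) (h b)).
Definition mmul (N : nat) (A B : Mat) : Mat :=
  fun a b => Csum N (fun c => Cmul (A a c) (B c b)).
Definition comm (N : nat) (A B : Mat) : Mat :=
  fun a b => Csub (mmul N A B a b) (mmul N B A a b).

Definition is_open (U : Cx -> Prop) : Prop :=
  forall z, U z -> exists r, 0 < r /\ forall w, Cnorm (Csub w z) < r -> U w.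

Definition is_connected (U : Cx -> Prop) : Prop :=
  forall V W : Cx -> Prop, is_open V -> is_open W ->
    (forall z, U z -> V z \/ W z) ->
    (forall z, U z -> V z -> W z -> False) ->
    (exists z, U z /\ V z) -> (exists z, U z /\ W z) -> False.

Definition cont_at (F : Cx -> Cx) (z : Cx) : Prop :=
  forall eps, 0 < eps -> exists del, 0 < del /\
    forall w, Cnorm (Csub w z) < del -> Cnorm (Csub (F w) (F z)) < eps.

Definition has_pdx (F : Cx -> Cx) (z l : Cx) : Prop :=
  derivable_pt_lim (fun t => re (F (mkC t (im z)))) (re z) (re l) /\
  derivable_pt_lim (fun t => im (F (mkC t (im z)))) (re z) (im l).
Definition has_pdy (F : Cx -> Cx) (z l : Cx) : Prop :=
  derivable_pt_lim (fun t => re (F (mkC (re z) t))) (im z) (re l) /\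
  derivable_pt_lim (fun t => im (F (mkC (re z) t))) (im z) (im l).

Definition has_pd (d : bool) : (Cx -> Cx) -> Cx -> Cx -> Prop :=
  if d then has_pdx else has_pdy.

(** the partial derivative as a total operator (its value is only meaningful
    where the derivative exists) *)
Definition pd (d : bool) (F : Cx -> Cx) (z : Cx) : Cx :=
  epsilon (inhabits C0) (fun l => has_pd d F z l).

(** Wirtinger derivatives  ∂ = (∂x - i ∂y)/2,  ∂bar = (∂x + i ∂y)/2 *)
Definition wd (F : Cx -> Cx) (z : Cx) : Cx :=
  Cmul (CR (/2)) (Csub (pd true F z) (Cmul Ci (pd false F z))).
Definition wdbar (F : Cx -> Cx) (z : Cx) : Cx :=
  Cmul (CR (/2)) (Cadd (pd true F z) (Cmul Ci (pd false F z))).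

Definition iterpd (w : list bool) (F : Cx -> Cx) : Cx -> Cx :=
  fold_right (fun d G => pd d G) F w.

Definition smooth_on (U : Cx -> Prop) (F : Cx -> Cx) : Prop :=
  (forall (w : list bool) (d : bool) (z : Cx), U z -> exists l, has_pd d (iterpd w F) z l) /\
  (forall (w : list bool) (z : Cx), U z -> cont_at (iterpd w F) z).

Definition smooth_vec (N : nat) (U : Cx -> Prop) (f : Cx -> Vec) : Prop :=
  forall a, (a < N)%nat -> smooth_on U (fun z => f z a).

Definition holomorphic_on (N : nat) (U : Cx -> Prop) (f : Cx -> Vec) : Prop :=
  smooth_vec N U f /\
  forall z a, U z -> (a < N)%nat -> wdbar (fun w => f w a) z = C0.

Definition nonconstant_on (N : nat) (U : Cx -> Prop) (f : Cx -> Vec) : Prop :=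
  exists z1 z2 a, U z1 /\ U z2 /\ (a < N)%nat /\ f z1 a <> f z2 a.

Definition Pplus (N : nat) (g : Cx -> Vec) : Cx -> Vec :=
  fun z a =>
    Csub (wd (fun w => g w a) z)
         (Cmul (g z a)
               (Cdiv (inner N (g z) (fun b => wd (fun w => g w b) z))
                     (inner N (g z) (g z)))).

Definition fj (N : nat) (f : Cx -> Vec) (j : nat) : Cx -> Vec :=
  Nat.iter j (Pplus N) f.

Definition nowhere_zero_on (N : nat) (U : Cx -> Prop) (g : Cx -> Vec) : Prop :=
  forall z, U z -> exists a, (a < N)%nat /\ g z a <> C0.

Definition Pj (N : nat) (f : Cx -> Vec) (j : nat) : Cx -> Mat :=
  fun z a b =>
    Cdiv (Cmul (fj N f j z a) (Cconj (fj N f j z b)))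
         (inner N (fj N f j z) (fj N f j z)).

Definition mwd (F : Cx -> Mat) (z : Cx) : Mat := fun a b => wd (fun w => F w a b) z.
Definition mwdbar (F : Cx -> Mat) (z : Cx) : Mat := fun a b => wdbar (fun w => F w a b) z.

(** omega_k = A dxi + Abar dxibar with
    A = i(-[∂P_k,P_k]),  Abar = i[∂bar P_k,P_k] *)
Definition omega_dxi (N : nat) (f : Cx -> Vec) (k : nat) : Cx -> Mat :=
  fun z a b => Cmul Ci (Copp (comm N (mwd (Pj N f k) z) (Pj N f k z) a b)).
Definition omega_dxibar (N : nat) (f : Cx -> Vec) (k : nat) : Cx -> Mat :=
  fun z a b => Cmul Ci (comm N (mwdbar (Pj N f k) z) (Pj N f k z) a b).

Definition Phi (N : nat) (f : Cx -> Vec) (k : nat) : Cx -> Mat :=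
  fun z a b =>
    Cmul (Copp Ci)
         (Cadd (Pj N f k z a b) (Cmul (CR 2) (Csum k (fun j => Pj N f j z a b)))).

(** "A dxi + Abar dxibar = dF on U" (entrywise for indices < N):
    F has partials F_x, F_y with  A = (F_x - i F_y)/2 = ∂F,
    Abar = (F_x + i F_y)/2 = ∂bar F. *)
Definition is_d_of (N : nat) (U : Cx -> Prop) (F A Abar : Cx -> Mat) : Prop :=
  forall z a b, U z -> (a < N)%nat -> (b < N)%nat ->
    exists lx ly,
      has_pdx (fun w => F w a b) z lx /\ has_pdy (fun w => F w a b) z ly /\
      A z a b = Cmul (CR (/2)) (Csub lx (Cmul Ci ly)) /\
      Abar z a b = Cmul (CR (/2)) (Cadd lx (Cmul Ci ly)).

(* Main.v *)
Require Import Defs.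
From Stdlib Require Import Reals.
From Stdlib Require Import Lra Lia Psatz Ring Field List.
From Stdlib Require Import ClassicalEpsilon FunctionalExtensionality PropExtensionality Classical.
Open Scope R_scope.

Lemma Ceq (z w : Cx) : re z = re w -> im z = im w -> z = w.
Proof. destruct z, w; simpl; intros; subst; reflexivity. Qed.

Ltac cx := repeat match goal with z : Cx |- _ => destruct z end;
  apply Ceq; unfold Cadd, Cmul, Csub, Copp, Cconj, CR, C0, Ci, Cinv, Cdiv in *; simpl.

Lemma Cx_ring : ring_theory C0 (CR 1) Cadd Cmul Csub Copp (@eq Cx).
Proof. constructor; intros; cx; ring. Qed.

Lemma Cx_field : field_theory C0 (CR 1) Cadd Cmul Csub Copp Cdiv Cinv (@eq Cx).
Proof.
  constructor.
  - exact Cx_ring.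
  - intro H. assert (E: re C0 = re (CR 1)) by (rewrite H; reflexivity). simpl in E. lra.
  - reflexivity.
  - intros p Hp. destruct p as [a b]. apply Ceq; unfold Cmul, Cinv, CR; simpl.
    + assert (a*a+b*b <> 0). { intro E. apply Hp. unfold C0. f_equal; nra. }
      field; auto.
    + assert (a*a+b*b <> 0). { intro E. apply Hp. unfold C0. f_equal; nra. }
      field; auto.
Qed.

Add Field Cfield : Cx_field.

Lemma Cconj_add a b : Cconj (Cadd a b) = Cadd (Cconj a) (Cconj b).
Proof. cx; ring. Qed.
Lemma Cconj_mul a b : Cconj (Cmul a b) = Cmul (Cconj a) (Cconj b).
Proof. cx; ring. Qed.
Lemma Cconj_opp a : Cconj (Copp a) = Copp (Cconj a).
Proof. cx; ring. Qed.
Lemma Cconj_sub a b : Cconj (Csub a b) = Csub (Cconj a) (Cconj b).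
Proof. cx; ring. Qed.
Lemma Cconj_inv a : Cconj (Cinv a) = Cinv (Cconj a).
Proof. cx; replace (- im * - im) with (im*im) by ring; unfold Rdiv; ring. Qed.
Lemma Cconj_div a b : Cconj (Cdiv a b) = Cdiv (Cconj a) (Cconj b).
Proof. unfold Cdiv. rewrite Cconj_mul, Cconj_inv. reflexivity. Qed.
Lemma Cconj_CR r : Cconj (CR r) = CR r.
Proof. cx; ring. Qed.
Lemma Cconj_C0 : Cconj C0 = C0.
Proof. cx; ring. Qed.
Lemma Cconj_Ci : Cconj Ci = Copp Ci.
Proof. cx; ring. Qed.
Lemma Cconj_conj a : Cconj (Cconj a) = a.
Proof. cx; ring. Qed.
Lemma Cconj_real a : im a = 0 -> Cconj a = a.
Proof. destruct a; simpl; intros; subst; cx; ring. Qed.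

Hint Rewrite Cconj_add Cconj_mul Cconj_opp Cconj_sub Cconj_inv Cconj_div Cconj_CR Cconj_C0 Cconj_Ci Cconj_conj : cconj.

Lemma Csum_ext n F G : (forall i, (i < n)%nat -> F i = G i) -> Csum n F = Csum n G.
Proof. induction n; simpl; intros; auto. rewrite IHn by (intros; apply H; lia). rewrite H by lia. reflexivity. Qed.
Lemma Csum_add n F G : Csum n (fun i => Cadd (F i) (G i)) = Cadd (Csum n F) (Csum n G).
Proof. induction n; simpl. cx; ring. rewrite IHn. ring. Qed.
Lemma Csum_scal n k F : Csum n (fun i => Cmul k (F i)) = Cmul k (Csum n F).
Proof. induction n; simpl. cx; ring. rewrite IHn. ring. Qed.
Lemma Csum_zero n : Csum n (fun _ => C0) = C0.
Proof. induction n; simpl; auto. rewrite IHn. ring. Qed.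
Lemma Csum_conj n F : Cconj (Csum n F) = Csum n (fun i => Cconj (F i)).
Proof. induction n; simpl. cx; ring. rewrite Cconj_add, IHn. reflexivity. Qed.
Lemma Csum_lin2 n k1 k2 F G :
  Csum n (fun i => Cadd (Cmul k1 (F i)) (Cmul k2 (G i))) = Cadd (Cmul k1 (Csum n F)) (Cmul k2 (Csum n G)).
Proof. rewrite Csum_add, !Csum_scal. reflexivity. Qed.

Lemma inner_conj N g h : Cconj (inner N g h) = inner N h g.
Proof. unfold inner. rewrite Csum_conj. apply Csum_ext. intros. autorewrite with cconj. ring. Qed.
Lemma inner_real N g : im (inner N g g) = 0.
Proof. unfold inner. induction N; simpl. reflexivity. simpl in IHN. rewrite IHN. ring. Qed.
Lemma inner_re_nonneg N g : 0 <= re (inner N g g).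
Proof. unfold inner. induction N; simpl. lra. nra. Qed.
Lemma inner_pos N g a : (a < N)%nat -> g a <> C0 -> 0 < re (inner N g g).
Proof.
  unfold inner. induction N; intros Ha Hg; [lia|]. simpl.
  destruct (Nat.eq_dec a N).
  - subst. assert (0 < re (g N) * re (g N) + im (g N) * im (g N)).
    { destruct (g N) as [x y] eqn:E; simpl.
      assert (~ (x = 0 /\ y = 0)). { intros [-> ->]. apply Hg. reflexivity. } nra. }
    pose proof (inner_re_nonneg N g). unfold inner in H0. nra.
  - pose proof (IHN ltac:(lia) Hg). nra.
Qed.
Lemma inner_nz N g a : (a < N)%nat -> g a <> C0 -> inner N g g <> C0.
Proof. intros Ha Hg E. pose proof (inner_pos N g a Ha Hg). rewrite E in H. simpl in H. lra. Qed.
Lemma Cconj_inner_self N g : Cconj (inner N g g) = inner N g g.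
Proof. apply Cconj_real, inner_real. Qed.


Lemma dR_eq f x l l' : derivable_pt_lim f x l -> l = l' -> derivable_pt_lim f x l'.
Proof. intros; subst; auto. Qed.
Lemma dR_plus f g x a b : derivable_pt_lim f x a -> derivable_pt_lim g x b ->
  derivable_pt_lim (fun t => f t + g t) x (a + b).
Proof. apply derivable_pt_lim_plus. Qed.
Lemma dR_minus f g x a b : derivable_pt_lim f x a -> derivable_pt_lim g x b ->
  derivable_pt_lim (fun t => f t - g t) x (a - b).
Proof. apply derivable_pt_lim_minus. Qed.
Lemma dR_mult f g x a b : derivable_pt_lim f x a -> derivable_pt_lim g x b ->
  derivable_pt_lim (fun t => f t * g t) x (a * g x + f x * b).
Proof. apply derivable_pt_lim_mult. Qed.
Lemma dR_opp f x a : derivable_pt_lim f x a -> derivable_pt_lim (fun t => - f t) x (- a).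
Proof. apply derivable_pt_lim_opp. Qed.
Lemma dR_const c x : derivable_pt_lim (fun _ => c) x 0.
Proof. apply derivable_pt_lim_const. Qed.
Lemma dR_div f g x a b : derivable_pt_lim f x a -> derivable_pt_lim g x b -> g x <> 0 ->
  derivable_pt_lim (fun t => f t / g t) x ((a * g x - b * f x) / Rsqr (g x)).
Proof. apply derivable_pt_lim_div. Qed.

Ltac dRs := repeat first [eassumption | apply dR_plus | apply dR_minus | apply dR_mult
                         | apply dR_opp | apply dR_const].

Lemma has_pd_unique d F z l1 l2 : has_pd d F z l1 -> has_pd d F z l2 -> l1 = l2.
Proof.
  destruct d; simpl; unfold has_pdx, has_pdy; intros [A B] [C D]; apply Ceq;
  eapply uniqueness_limite; eauto.
Qed.
Lemma pd_spec d F z : (exists l, has_pd d F z l) -> has_pd d F z (pd d F z).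
Proof. intros H. unfold pd. apply epsilon_spec. exact H. Qed.
Lemma pd_val d F z l : has_pd d F z l -> pd d F z = l.
Proof. intros H. eapply has_pd_unique; [apply pd_spec; eauto | exact H]. Qed.

Section Rules.
Variable d : bool.
Variables F G : Cx -> Cx.
Variable z : Cx.

Lemma has_pd_add l1 l2 : has_pd d F z l1 -> has_pd d G z l2 ->
  has_pd d (fun w => Cadd (F w) (G w)) z (Cadd l1 l2).
Proof. destruct d, z; simpl; unfold has_pdx, has_pdy; simpl; intros [A B] [C D]; split; dRs. Qed.
Lemma has_pd_opp l1 : has_pd d F z l1 -> has_pd d (fun w => Copp (F w)) z (Copp l1).
Proof. destruct d, z; simpl; unfold has_pdx, has_pdy; simpl; intros [A B]; split; dRs. Qed.
Lemma has_pd_sub l1 l2 : has_pd d F z l1 -> has_pd d G z l2 ->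
  has_pd d (fun w => Csub (F w) (G w)) z (Csub l1 l2).
Proof. destruct d, z; simpl; unfold has_pdx, has_pdy; simpl; intros [A B] [C D]; split; dRs. Qed.
Lemma has_pd_mul l1 l2 : has_pd d F z l1 -> has_pd d G z l2 ->
  has_pd d (fun w => Cmul (F w) (G w)) z (Cadd (Cmul l1 (G z)) (Cmul (F z) l2)).
Proof.
  destruct d, z; simpl; unfold has_pdx, has_pdy; simpl; intros [A B] [C D]; split;
  (eapply dR_eq; [dRs | simpl; ring]).
Qed.
Lemma has_pd_conj l1 : has_pd d F z l1 -> has_pd d (fun w => Cconj (F w)) z (Cconj l1).
Proof. destruct d, z; simpl; unfold has_pdx, has_pdy; simpl; intros [A B]; split; dRs. Qed.
Lemma has_pd_const c : has_pd d (fun _ => c) z C0.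
Proof. destruct d, z; simpl; unfold has_pdx, has_pdy; simpl; split; dRs. Qed.
Lemma has_pd_inv l1 : F z <> C0 -> has_pd d F z l1 ->
  has_pd d (fun w => Cinv (F w)) z (Copp (Cmul l1 (Cmul (Cinv (F z)) (Cinv (F z))))).
Proof.
  intros Hz. assert (Hn : re (F z) * re (F z) + im (F z) * im (F z) <> 0).
  { intro E. apply Hz. apply Ceq; simpl; nra. }
  destruct d, z; simpl; unfold has_pdx, has_pdy; simpl; intros [A B]; split.
  - eapply dR_eq. apply dR_div; [exact A | dRs | exact Hn].
    unfold Rsqr. simpl. field. auto.
  - eapply dR_eq. apply dR_div; [apply dR_opp; exact B | dRs | exact Hn].
    unfold Rsqr. simpl. field. auto.
  - eapply dR_eq. apply dR_div; [exact A | dRs | exact Hn].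
    unfold Rsqr. simpl. field. auto.
  - eapply dR_eq. apply dR_div; [apply dR_opp; exact B | dRs | exact Hn].
    unfold Rsqr. simpl. field. auto.
Qed.
End Rules.

Lemma Cnorm_re c : Rabs (re c) <= Cnorm c.
Proof.
  unfold Cnorm. rewrite <- sqrt_Rsqr_abs. apply sqrt_le_1_alt. unfold Rsqr.
  pose proof (Rle_0_sqr (im c)). unfold Rsqr in H. lra.
Qed.
Lemma Cnorm_im c : Rabs (im c) <= Cnorm c.
Proof.
  unfold Cnorm. rewrite <- sqrt_Rsqr_abs. apply sqrt_le_1_alt. unfold Rsqr.
  pose proof (Rle_0_sqr (re c)). unfold Rsqr in H. lra.
Qed.
Lemma Cnorm_le a b : Cnorm (mkC a b) <= Rabs a + Rabs b.
Proof.
  unfold Cnorm; simpl.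
  assert (0 <= Rabs a + Rabs b) by (pose proof (Rabs_pos a); pose proof (Rabs_pos b); lra).
  rewrite <- (sqrt_Rsqr (Rabs a + Rabs b)) by auto. apply sqrt_le_1_alt. unfold Rsqr.
  pose proof (Rabs_pos a); pose proof (Rabs_pos b).
  assert (a*a = Rabs a * Rabs a) by (rewrite <- Rabs_mult; rewrite Rabs_right; nra).
  assert (b*b = Rabs b * Rabs b) by (rewrite <- Rabs_mult; rewrite Rabs_right; nra).
  nra.
Qed.

Lemma has_pd_local d F G z r l : 0 < r -> (forall w, Cnorm (Csub w z) < r -> F w = G w) ->
  has_pd d F z l -> has_pd d G z l.
Proof.
  intros Hr HFG. destruct z as [x y].
  assert (Hx : forall t, x - r < t < x + r -> F (mkC t y) = G (mkC t y)).
  { intros t Ht. apply HFG. eapply Rle_lt_trans. apply Cnorm_le. simpl.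
    replace (y + - y) with 0 by ring. rewrite Rabs_R0. rewrite Rplus_0_r. apply Rabs_def1; lra. }
  assert (Hy : forall t, y - r < t < y + r -> F (mkC x t) = G (mkC x t)).
  { intros t Ht. apply HFG. eapply Rle_lt_trans. apply Cnorm_le. simpl.
    replace (x + - x) with 0 by ring. rewrite Rabs_R0. rewrite Rplus_0_l. apply Rabs_def1; lra. }
  destruct d; simpl; unfold has_pdx, has_pdy; simpl; intros [A B]; split.
  - eapply derivable_pt_lim_locally_ext with (a := x - r) (b := x + r); [lra | | eassumption].
    intros; simpl; rewrite Hx; auto.
  - eapply derivable_pt_lim_locally_ext with (a := x - r) (b := x + r); [lra | | eassumption].
    intros; simpl; rewrite Hx; auto.
  - eapply derivable_pt_lim_locally_ext with (a := y - r) (b := y + r); [lra | | eassumption].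
    intros; simpl; rewrite Hy; auto.
  - eapply derivable_pt_lim_locally_ext with (a := y - r) (b := y + r); [lra | | eassumption].
    intros; simpl; rewrite Hy; auto.
Qed.

Lemma has_pd_localU U d F G z l : is_open U -> (forall w, U w -> F w = G w) -> U z ->
  has_pd d F z l -> has_pd d G z l.
Proof.
  intros HU HFG Hz. destruct (HU z Hz) as [r [Hr Hb]].
  apply has_pd_local with r; auto.
Qed.

Lemma pd_local U d F G z : is_open U -> (forall w, U w -> F w = G w) -> U z ->
  pd d F z = pd d G z.
Proof.
  intros HU HFG Hz. unfold pd. f_equal. apply functional_extensionality. intro l.
  apply propositional_extensionality. split; apply has_pd_localU with U; auto.
  intros; symmetry; auto.
Qed.

Lemma schwarz_R (phi px py pxy pyx : R -> R -> R) x y r :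
  0 < r ->
  (forall s t, Rabs (s - x) < r -> Rabs (t - y) < r ->
     derivable_pt_lim (fun u => phi u t) s (px s t) /\
     derivable_pt_lim (fun u => phi s u) t (py s t) /\
     derivable_pt_lim (fun u => px s u) t (pxy s t) /\
     derivable_pt_lim (fun u => py u t) s (pyx s t)) ->
  (forall e, 0 < e -> exists del, 0 < del /\ forall s t, Rabs (s - x) < del -> Rabs (t - y) < del ->
     Rabs (pxy s t - pxy x y) < e /\ Rabs (pyx s t - pyx x y) < e) ->
  pxy x y = pyx x y.
Proof.
  intros Hr HD HC.
  assert (Main : forall e, 0 < e -> Rabs (pxy x y - pyx x y) < 2 * e).
  { intros e He. destruct (HC e He) as [del [Hdel Hc]].
    set (h := Rmin del r / 2).
    assert (Hh0 : 0 < h) by (unfold h; unfold Rmin; destruct (Rle_dec del r); lra).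
    assert (Hh1 : h < del) by (unfold h; pose proof (Rmin_l del r); lra).
    assert (Hh2 : h < r) by (unfold h; pose proof (Rmin_r del r); lra).
    assert (B : forall a b, a <= b <= a + h -> Rabs (b - a) < Rmin del r).
    { intros a b Hb. rewrite Rabs_right by lra. unfold h in *. pose proof (Rmin_l del r). lra. }
    assert (Bd : forall a b, a <= b <= a + h -> Rabs (b - a) < del).
    { intros a b Hb. rewrite Rabs_right by lra. lra. }
    assert (Br : forall a b, a <= b <= a + h -> Rabs (b - a) < r).
    { intros a b Hb. rewrite Rabs_right by lra. lra. }
    destruct (MVT_cor2 (fun s => phi s (y+h) - phi s y) (fun s => px s (y+h) - px s y) x (x+h))
      as [xi [E1 Hxi]]; [lra| |].
    { intros c Hc'. apply dR_minus; apply HD; apply Br; lra. }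
    destruct (MVT_cor2 (fun t => px xi t) (fun t => pxy xi t) y (y+h)) as [eta [E2 Heta]]; [lra| |].
    { intros c Hc'. apply HD; apply Br; lra. }
    destruct (MVT_cor2 (fun t => phi (x+h) t - phi x t) (fun t => py (x+h) t - py x t) y (y+h))
      as [eta' [E3 Heta']]; [lra| |].
    { intros c Hc'. apply dR_minus; apply HD; apply Br; lra. }
    destruct (MVT_cor2 (fun s => py s eta') (fun s => pyx s eta') x (x+h)) as [xi' [E4 Hxi']]; [lra| |].
    { intros c Hc'. apply HD; apply Br; lra. }
    assert (Eq : pxy xi eta = pyx xi' eta').
    { assert (pxy xi eta * h * h = pyx xi' eta' * h * h).
      { replace (x + h - x) with h in * by ring. replace (y + h - y) with h in * by ring.
        rewrite <- E2, <- E4. nra. }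
      apply Rmult_eq_reg_r with h; [|lra]. apply Rmult_eq_reg_r with h; [|lra]. exact H. }
    destruct (Hc xi eta) as [C1 _]; [apply Bd; lra | apply Bd; lra |].
    destruct (Hc xi' eta') as [_ C2]; [apply Bd; lra | apply Bd; lra |].
    rewrite Eq in C1.
    replace (pxy x y - pyx x y) with ((pyx xi' eta' - pyx x y) - (pyx xi' eta' - pxy x y)) by ring.
    eapply Rle_lt_trans. apply Rabs_triang. rewrite Rabs_Ropp. lra. }
  destruct (Req_dec (pxy x y - pyx x y) 0). lra.
  exfalso. assert (0 < Rabs (pxy x y - pyx x y)) by (apply Rabs_pos_lt; auto).
  specialize (Main (Rabs (pxy x y - pyx x y) / 4) ltac:(lra)). lra.
Qed.

Lemma ball_U U x y : is_open U -> U (mkC x y) ->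
  exists r, 0 < r /\ forall s t, Rabs (s - x) < r -> Rabs (t - y) < r -> U (mkC s t).
Proof.
  intros HU Hz. destruct (HU _ Hz) as [r0 [Hr0 Hb]]. exists (r0/2). split. lra.
  intros s t Hs Ht. apply Hb. eapply Rle_lt_trans. apply Cnorm_le. simpl.
  unfold Rminus in Hs, Ht. lra.
Qed.

Lemma cont_at_coords G x y : cont_at G (mkC x y) ->
  forall e, 0 < e -> exists del, 0 < del /\ forall s t, Rabs (s - x) < del -> Rabs (t - y) < del ->
     Rabs (re (G (mkC s t)) - re (G (mkC x y))) < e /\ Rabs (im (G (mkC s t)) - im (G (mkC x y))) < e.
Proof.
  intros HC e He. destruct (HC e He) as [del [Hd Hc]]. exists (del/2). split. lra.
  intros s t Hs Ht.
  assert (Cnorm (Csub (G (mkC s t)) (G (mkC x y))) < e).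
  { apply Hc. eapply Rle_lt_trans. apply Cnorm_le. simpl. unfold Rminus in Hs, Ht. lra. }
  split; eapply Rle_lt_trans; [| exact H | | exact H].
  - pose proof (Cnorm_re (Csub (G (mkC s t)) (G (mkC x y)))). simpl in H0. exact H0.
  - pose proof (Cnorm_im (Csub (G (mkC s t)) (G (mkC x y)))). simpl in H0. exact H0.
Qed.

Lemma schwarz_C U F z : is_open U -> U z ->
  (forall w, U w -> (exists l, has_pd true F w l) /\ (exists l, has_pd false F w l) /\
     (exists l, has_pd false (pd true F) w l) /\ (exists l, has_pd true (pd false F) w l)) ->
  cont_at (pd false (pd true F)) z -> cont_at (pd true (pd false F)) z ->
  pd false (pd true F) z = pd true (pd false F) z.
Proof.
  intros HU Hz HD C1 C2. destruct z as [x y].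
  destruct (ball_U U x y HU Hz) as [r [Hr Hb]].
  pose proof (cont_at_coords _ _ _ C1) as K1. pose proof (cont_at_coords _ _ _ C2) as K2.
  assert (HD' : forall s t, Rabs (s - x) < r -> Rabs (t - y) < r ->
    has_pd true F (mkC s t) (pd true F (mkC s t)) /\
    has_pd false F (mkC s t) (pd false F (mkC s t)) /\
    has_pd false (pd true F) (mkC s t) (pd false (pd true F) (mkC s t)) /\
    has_pd true (pd false F) (mkC s t) (pd true (pd false F) (mkC s t))).
  { intros s t Hs Ht. destruct (HD _ (Hb s t Hs Ht)) as [A [B [C D]]].
    split; [|split; [|split]]; apply pd_spec; auto. }
  apply Ceq.
  - apply (schwarz_R (fun s t => re (F (mkC s t))) (fun s t => re (pd true F (mkC s t)))
      (fun s t => re (pd false F (mkC s t))) (fun s t => re (pd false (pd true F) (mkC s t)))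
      (fun s t => re (pd true (pd false F) (mkC s t))) x y r Hr).
    + intros s t Hs Ht. destruct (HD' s t Hs Ht) as [[A _] [[B _] [[C _] [D _]]]].
      simpl in *. auto.
    + intros e He. destruct (K1 e He) as [d1 [Hd1 Q1]]. destruct (K2 e He) as [d2 [Hd2 Q2]].
      exists (Rmin d1 d2). split. apply Rmin_pos; auto.
      intros s t Hs Ht. pose proof (Rmin_l d1 d2). pose proof (Rmin_r d1 d2).
      split; [apply Q1 | apply Q2]; lra.
  - apply (schwarz_R (fun s t => im (F (mkC s t))) (fun s t => im (pd true F (mkC s t)))
      (fun s t => im (pd false F (mkC s t))) (fun s t => im (pd false (pd true F) (mkC s t)))
      (fun s t => im (pd true (pd false F) (mkC s t))) x y r Hr).
    + intros s t Hs Ht. destruct (HD' s t Hs Ht) as [[_ A] [[_ B] [[_ C] [_ D]]]].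
      simpl in *. auto.
    + intros e He. destruct (K1 e He) as [d1 [Hd1 Q1]]. destruct (K2 e He) as [d2 [Hd2 Q2]].
      exists (Rmin d1 d2). split. apply Rmin_pos; auto.
      intros s t Hs Ht. pose proof (Rmin_l d1 d2). pose proof (Rmin_r d1 d2).
      split; [apply Q1 | apply Q2]; lra.
Qed.

Section K.
Variable U : Cx -> Prop.
Hypothesis HU : is_open U.

Definition ex_pd d F z := exists l, has_pd d F z l.

Fixpoint Kn (n : nat) (F : Cx -> Cx) : Prop :=
  match n with
  | O => True
  | S m => (forall z, U z -> (forall d, ex_pd d F z) /\ (forall d d', ex_pd d' (pd d F) z) /\
             pd false (pd true F) z = pd true (pd false F) z) /\
           forall d, Kn m (pd d F)
  end.

Definition Kinf F := forall n, Kn n F.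

Lemma pd_loc_val d A B z l : (forall w, U w -> A w = B w) -> U z -> has_pd d B z l -> pd d A z = l.
Proof. intros E Hz H. rewrite (pd_local U d A B z HU E Hz). apply pd_val; auto. Qed.
Lemma ex_loc d A B z l : (forall w, U w -> A w = B w) -> U z -> has_pd d B z l -> ex_pd d A z.
Proof. intros E Hz H. exists l. apply has_pd_localU with U B; auto. intros; symmetry; auto. Qed.
Lemma spec d F z : ex_pd d F z -> has_pd d F z (pd d F z).
Proof. apply pd_spec. Qed.

Lemma Kn_mono n F : Kn (S n) F -> Kn n F.
Proof.
  revert F; induction n; intros F H; [exact I|].
  destruct H as [H1 H2]. split.
  - intros z Hz. destruct (H1 z Hz) as [A [B C]]. auto.
  - intros d. apply IHn. apply H2.
Qed.

Lemma Kn_local n F G : (forall w, U w -> F w = G w) -> Kn n F -> Kn n G.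
Proof.
  revert F G; induction n; intros F G E H; simpl; auto.
  destruct H as [H1 H2].
  assert (Ed : forall d w, U w -> pd d F w = pd d G w) by (intros; apply pd_local with U; auto).
  split.
  - intros z Hz. destruct (H1 z Hz) as [A [B C]]. split; [|split].
    + intros d. destruct (A d) as [l Hl]. apply ex_loc with F l; auto. intros; symmetry; auto.
    + intros d d'. destruct (B d d') as [l Hl]. apply ex_loc with (pd d F) l; auto.
      intros; symmetry; auto.
    + rewrite <- (pd_local U false (pd true F) (pd true G) z HU); auto.
      rewrite <- (pd_local U true (pd false F) (pd false G) z HU); auto.
  - intros d. apply IHn with (pd d F); auto.
Qed.

Lemma pd_const d c : pd d (fun _ => c) = fun _ => C0.
Proof. apply functional_extensionality. intros z. apply pd_val. apply has_pd_const. Qed.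

Lemma Kn_const n c : Kn n (fun _ => c).
Proof.
  revert c; induction n; intros c; simpl; auto. split.
  - intros z Hz. split; [|split].
    + intros d. exists C0. apply has_pd_const.
    + intros d d'. rewrite pd_const. exists C0. apply has_pd_const.
    + rewrite !pd_const. reflexivity.
  - intros d. rewrite pd_const. apply IHn.
Qed.

Ltac dest_K H := let a := fresh "KA" in let b := fresh "KB" in let c := fresh "KC" in
  destruct H as [a b]; idtac.

Ltac comm_tac E Hz tac :=
  match goal with |- pd false (pd true ?H) ?z = pd true (pd false ?H) ?z =>
    erewrite (pd_loc_val false (pd true H)); [| intros w Hw; apply (E true w Hw) | exact Hz | tac];
    erewrite (pd_loc_val true (pd false H)); [| intros w Hw; apply (E false w Hw) | exact Hz | tac] end.

Lemma Kn_add n F G : Kn n F -> Kn n G -> Kn n (fun w => Cadd (F w) (G w)).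
Proof.
  revert F G; induction n; intros F G HF HG; simpl; auto.
  destruct HF as [F1 F2]. destruct HG as [G1 G2].
  assert (E : forall d w, U w -> pd d (fun w => Cadd (F w) (G w)) w = Cadd (pd d F w) (pd d G w)).
  { intros d w Hw. destruct (F1 w Hw) as [A _]. destruct (G1 w Hw) as [B _].
    apply pd_val. apply has_pd_add; apply spec; auto. }
  split.
  - intros z Hz. destruct (F1 z Hz) as [A [B C]]. destruct (G1 z Hz) as [A' [B' C']].
    split; [|split].
    + intros d. eexists. apply has_pd_add; apply spec; auto.
    + intros d d'. eapply ex_loc. intros w Hw. apply (E d w Hw). auto.
      apply has_pd_add; apply spec; auto.
    + comm_tac E Hz ltac:(apply has_pd_add; apply spec; auto).
      rewrite C, C'. reflexivity.
  - intros d. apply Kn_local with (fun w => Cadd (pd d F w) (pd d G w)).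
    intros; symmetry; auto. apply IHn; auto.
Qed.

Lemma Kn_mul n F G : Kn n F -> Kn n G -> Kn n (fun w => Cmul (F w) (G w)).
Proof.
  revert F G; induction n; intros F G HF HG; simpl; auto.
  pose proof (Kn_mono _ _ HF) as HFm. pose proof (Kn_mono _ _ HG) as HGm.
  destruct HF as [F1 F2]. destruct HG as [G1 G2].
  assert (E : forall d w, U w -> pd d (fun w => Cmul (F w) (G w)) w =
     Cadd (Cmul (pd d F w) (G w)) (Cmul (F w) (pd d G w))).
  { intros d w Hw. destruct (F1 w Hw) as [A _]. destruct (G1 w Hw) as [B _].
    apply pd_val. apply has_pd_mul; apply spec; auto. }
  split.
  - intros z Hz. destruct (F1 z Hz) as [A [B C]]. destruct (G1 z Hz) as [A' [B' C']].
    split; [|split].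
    + intros d. eexists. apply has_pd_mul; apply spec; auto.
    + intros d d'. eapply ex_loc. intros w Hw. apply (E d w Hw). auto.
      apply has_pd_add; apply has_pd_mul; apply spec; auto.
    + comm_tac E Hz ltac:(apply has_pd_add; apply has_pd_mul; apply spec; auto).
      rewrite C, C'. ring.
  - intros d. apply Kn_local with (fun w => Cadd (Cmul (pd d F w) (G w)) (Cmul (F w) (pd d G w))).
    intros; symmetry; auto. apply Kn_add; apply IHn; auto.
Qed.

Lemma Kn_conj n F : Kn n F -> Kn n (fun w => Cconj (F w)).
Proof.
  revert F; induction n; intros F HF; simpl; auto.
  destruct HF as [F1 F2].
  assert (E : forall d w, U w -> pd d (fun w => Cconj (F w)) w = Cconj (pd d F w)).
  { intros d w Hw. destruct (F1 w Hw) as [A _].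
    apply pd_val. apply has_pd_conj; apply spec; auto. }
  split.
  - intros z Hz. destruct (F1 z Hz) as [A [B C]].
    split; [|split].
    + intros d. eexists. apply has_pd_conj; apply spec; auto.
    + intros d d'. eapply ex_loc. intros w Hw. apply (E d w Hw). auto.
      apply has_pd_conj; apply spec; auto.
    + comm_tac E Hz ltac:(apply has_pd_conj; apply spec; auto).
      rewrite C. reflexivity.
  - intros d. apply Kn_local with (fun w => Cconj (pd d F w)).
    intros; symmetry; auto. apply IHn; auto.
Qed.

Lemma Kn_inv n G : (forall w, U w -> G w <> C0) -> Kn n G -> Kn n (fun w => Cinv (G w)).
Proof.
  intros Hnz. revert G Hnz; induction n; intros G Hnz HG; simpl; auto.
  pose proof (Kn_mono _ _ HG) as HGm.
  destruct HG as [G1 G2].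
  assert (E : forall d w, U w -> pd d (fun w => Cinv (G w)) w =
     Copp (Cmul (pd d G w) (Cmul (Cinv (G w)) (Cinv (G w))))).
  { intros d w Hw. destruct (G1 w Hw) as [A _].
    apply pd_val. apply has_pd_inv; auto; apply spec; auto. }
  split.
  - intros z Hz. destruct (G1 z Hz) as [A [B C]].
    assert (HI : forall d, has_pd d (fun w => Cinv (G w)) z
                   (Copp (Cmul (pd d G z) (Cmul (Cinv (G z)) (Cinv (G z)))))).
    { intros d. apply has_pd_inv; auto. apply spec; auto. }
    split; [|split].
    + intros d. eexists. apply HI.
    + intros d d'. eapply ex_loc. intros w Hw. apply (E d w Hw). auto.
      apply has_pd_opp; apply has_pd_mul; [apply spec; auto|apply has_pd_mul; apply HI].
    + comm_tac E Hz ltac:(apply has_pd_opp; apply has_pd_mul; [apply spec; auto|apply has_pd_mul; apply HI]).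
      rewrite C. ring.
  - intros d. apply Kn_local with (fun w => Copp (Cmul (pd d G w) (Cmul (Cinv (G w)) (Cinv (G w))))).
    intros; symmetry; auto.
    apply Kn_local with (fun w => Cmul (CR (-1)) (Cmul (pd d G w) (Cmul (Cinv (G w)) (Cinv (G w))))).
    intros; cx; ring.
    apply Kn_mul. apply Kn_const. apply Kn_mul. apply G2. apply Kn_mul; apply IHn; auto.
Qed.

Lemma Kn_pd n d F : Kn (S n) F -> Kn n (pd d F).
Proof. intros [_ H]. apply H. Qed.

Lemma Kinf_add F G : Kinf F -> Kinf G -> Kinf (fun w => Cadd (F w) (G w)).
Proof. intros A B n. apply Kn_add; auto. Qed.
Lemma Kinf_mul F G : Kinf F -> Kinf G -> Kinf (fun w => Cmul (F w) (G w)).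
Proof. intros A B n. apply Kn_mul; auto. Qed.
Lemma Kinf_conj F : Kinf F -> Kinf (fun w => Cconj (F w)).
Proof. intros A n. apply Kn_conj; auto. Qed.
Lemma Kinf_inv F : (forall w, U w -> F w <> C0) -> Kinf F -> Kinf (fun w => Cinv (F w)).
Proof. intros H A n. apply Kn_inv; auto. Qed.
Lemma Kinf_const c : Kinf (fun _ => c).
Proof. intros n. apply Kn_const. Qed.
Lemma Kinf_pd d F : Kinf F -> Kinf (pd d F).
Proof. intros A n. apply Kn_pd. apply A. Qed.
Lemma Kinf_local F G : (forall w, U w -> F w = G w) -> Kinf F -> Kinf G.
Proof. intros E A n. apply Kn_local with F; auto. Qed.
Lemma Kinf_opp F : Kinf F -> Kinf (fun w => Copp (F w)).
Proof. intros A. apply Kinf_local with (fun w => Cmul (CR (-1)) (F w)). intros; cx; ring.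
  apply Kinf_mul; auto using Kinf_const. Qed.
Lemma Kinf_sub F G : Kinf F -> Kinf G -> Kinf (fun w => Csub (F w) (G w)).
Proof. intros A B. apply Kinf_add; auto. apply Kinf_opp; auto. Qed.
Lemma Kinf_div F G : (forall w, U w -> G w <> C0) -> Kinf F -> Kinf G -> Kinf (fun w => Cdiv (F w) (G w)).
Proof. intros H A B. apply Kinf_mul; auto. apply Kinf_inv; auto. Qed.
Lemma Kinf_wd F : Kinf F -> Kinf (wd F).
Proof. intros A. unfold wd. apply Kinf_mul. apply Kinf_const. apply Kinf_sub.
  apply Kinf_pd; auto. apply Kinf_mul. apply Kinf_const. apply Kinf_pd; auto. Qed.
Lemma Kinf_wdbar F : Kinf F -> Kinf (wdbar F).
Proof. intros A. unfold wdbar. apply Kinf_mul. apply Kinf_const. apply Kinf_add.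
  apply Kinf_pd; auto. apply Kinf_mul. apply Kinf_const. apply Kinf_pd; auto. Qed.
Lemma Kinf_sum n (F : nat -> Cx -> Cx) : (forall i, (i < n)%nat -> Kinf (F i)) ->
  Kinf (fun w => Csum n (fun i => F i w)).
Proof.
  induction n; intros H; simpl. apply Kinf_const.
  apply Kinf_add. apply IHn; intros; apply H; lia. apply H; lia.
Qed.
End K.

Lemma Kn_base U F : is_open U -> smooth_on U F -> forall n w, Kn U n (iterpd w F).
Proof.
  intros HU [S1 S2] n. induction n; intros w; simpl; auto. split.
  - intros z Hz. split; [|split].
    + intros d. apply (S1 w d z Hz).
    + intros d d'. apply (S1 (d :: w) d' z Hz).
    + apply schwarz_C with U; auto.
      * intros w' Hw'. split; [|split; [|split]].
        apply (S1 w true w' Hw'). apply (S1 w false w' Hw').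
        apply (S1 (true :: w) false w' Hw'). apply (S1 (false :: w) true w' Hw').
      * apply (S2 (false :: true :: w) z Hz).
      * apply (S2 (true :: false :: w) z Hz).
  - intros d. apply (IHn (d :: w)).
Qed.

Lemma Kinf_base U F : is_open U -> smooth_on U F -> Kinf U F.
Proof. intros HU HS n. apply (Kn_base U F HU HS n nil). Qed.

Definition D1 F z := forall d, ex_pd d F z.

Lemma Kinf_D1 U F z : Kinf U F -> U z -> D1 F z.
Proof. intros H Hz. destruct (H 1%nat) as [H1 _]. destruct (H1 z Hz) as [A _]. exact A. Qed.


Section W.
Variables F G : Cx -> Cx.
Variable z : Cx.
Hypothesis HF : D1 F z.
Hypothesis HG : D1 G z.

Lemma wd_add : wd (fun w => Cadd (F w) (G w)) z = Cadd (wd F z) (wd G z).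
Proof. unfold wd. rewrite !(pd_val _ _ z _ (has_pd_add _ _ _ z _ _ (spec _ _ _ (HF _)) (spec _ _ _ (HG _)))). ring. Qed.
Lemma wdbar_add : wdbar (fun w => Cadd (F w) (G w)) z = Cadd (wdbar F z) (wdbar G z).
Proof. unfold wdbar. rewrite !(pd_val _ _ z _ (has_pd_add _ _ _ z _ _ (spec _ _ _ (HF _)) (spec _ _ _ (HG _)))). ring. Qed.
Lemma wd_sub : wd (fun w => Csub (F w) (G w)) z = Csub (wd F z) (wd G z).
Proof. unfold wd. rewrite !(pd_val _ _ z _ (has_pd_sub _ _ _ z _ _ (spec _ _ _ (HF _)) (spec _ _ _ (HG _)))). ring. Qed.
Lemma wdbar_sub : wdbar (fun w => Csub (F w) (G w)) z = Csub (wdbar F z) (wdbar G z).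
Proof. unfold wdbar. rewrite !(pd_val _ _ z _ (has_pd_sub _ _ _ z _ _ (spec _ _ _ (HF _)) (spec _ _ _ (HG _)))). ring. Qed.
Lemma wd_mul : wd (fun w => Cmul (F w) (G w)) z = Cadd (Cmul (wd F z) (G z)) (Cmul (F z) (wd G z)).
Proof. unfold wd. rewrite !(pd_val _ _ z _ (has_pd_mul _ _ _ z _ _ (spec _ _ _ (HF _)) (spec _ _ _ (HG _)))). ring. Qed.
Lemma wdbar_mul : wdbar (fun w => Cmul (F w) (G w)) z = Cadd (Cmul (wdbar F z) (G z)) (Cmul (F z) (wdbar G z)).
Proof. unfold wdbar. rewrite !(pd_val _ _ z _ (has_pd_mul _ _ _ z _ _ (spec _ _ _ (HF _)) (spec _ _ _ (HG _)))). ring. Qed.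
Lemma wd_opp : wd (fun w => Copp (F w)) z = Copp (wd F z).
Proof. unfold wd. rewrite !(pd_val _ _ z _ (has_pd_opp _ _ z _ (spec _ _ _ (HF _)))). ring. Qed.
Lemma wdbar_opp : wdbar (fun w => Copp (F w)) z = Copp (wdbar F z).
Proof. unfold wdbar. rewrite !(pd_val _ _ z _ (has_pd_opp _ _ z _ (spec _ _ _ (HF _)))). ring. Qed.
Lemma wd_conj : wd (fun w => Cconj (F w)) z = Cconj (wdbar F z).
Proof. unfold wd, wdbar. rewrite !(pd_val _ _ z _ (has_pd_conj _ _ z _ (spec _ _ _ (HF _)))).
  autorewrite with cconj. ring. Qed.
Lemma wdbar_conj : wdbar (fun w => Cconj (F w)) z = Cconj (wd F z).
Proof. unfold wd, wdbar. rewrite !(pd_val _ _ z _ (has_pd_conj _ _ z _ (spec _ _ _ (HF _)))).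
  autorewrite with cconj. ring. Qed.
Lemma wd_inv : F z <> C0 -> wd (fun w => Cinv (F w)) z = Copp (Cmul (wd F z) (Cmul (Cinv (F z)) (Cinv (F z)))).
Proof. intro H. unfold wd. rewrite !(pd_val _ _ z _ (has_pd_inv _ _ z _ H (spec _ _ _ (HF _)))). ring. Qed.
Lemma wdbar_inv : F z <> C0 -> wdbar (fun w => Cinv (F w)) z = Copp (Cmul (wdbar F z) (Cmul (Cinv (F z)) (Cinv (F z)))).
Proof. intro H. unfold wdbar. rewrite !(pd_val _ _ z _ (has_pd_inv _ _ z _ H (spec _ _ _ (HF _)))). ring. Qed.
End W.

Lemma wd_const c z : wd (fun _ => c) z = C0.
Proof. unfold wd. rewrite !pd_const. cx; ring. Qed.
Lemma wdbar_const c z : wdbar (fun _ => c) z = C0.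
Proof. unfold wdbar. rewrite !pd_const. cx; ring. Qed.

Lemma wd_sum U n (F : nat -> Cx -> Cx) z : is_open U -> U z -> (forall i, (i < n)%nat -> Kinf U (F i)) ->
  wd (fun w => Csum n (fun i => F i w)) z = Csum n (fun i => wd (F i) z).
Proof.
  intros HU Hz. induction n; intros H; simpl.
  - apply wd_const.
  - rewrite wd_add. rewrite IHn by (intros; apply H; lia). reflexivity.
    apply Kinf_D1 with U; auto. apply (Kinf_sum U HU); intros; apply H; lia.
    apply Kinf_D1 with U; auto.
Qed.
Lemma wdbar_sum U n (F : nat -> Cx -> Cx) z : is_open U -> U z -> (forall i, (i < n)%nat -> Kinf U (F i)) ->
  wdbar (fun w => Csum n (fun i => F i w)) z = Csum n (fun i => wdbar (F i) z).
Proof.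
  intros HU Hz. induction n; intros H; simpl.
  - apply wdbar_const.
  - rewrite wdbar_add. rewrite IHn by (intros; apply H; lia). reflexivity.
    apply Kinf_D1 with U; auto. apply (Kinf_sum U HU); intros; apply H; lia.
    apply Kinf_D1 with U; auto.
Qed.

Lemma has_pd_eq d F z l l' : has_pd d F z l -> l = l' -> has_pd d F z l'.
Proof. intros; subst; auto. Qed.

Lemma comm_wd U F z : Kinf U F -> U z -> wdbar (wd F) z = wd (wdbar F) z.
Proof.
  intros HK Hz. destruct (HK 1%nat) as [H1 _]. destruct (H1 z Hz) as [A [B C]].
  assert (E1 : forall d, pd d (wd F) z =
     Cmul (CR (/2)) (Csub (pd d (pd true F) z) (Cmul Ci (pd d (pd false F) z)))).
  { intros d. unfold wd. apply pd_val. eapply has_pd_eq.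
    apply has_pd_mul; [apply has_pd_const | apply has_pd_sub; [apply spec; auto |
      apply has_pd_mul; [apply has_pd_const | apply spec; auto]]].
    cbv beta; ring. }
  assert (E2 : forall d, pd d (wdbar F) z =
     Cmul (CR (/2)) (Cadd (pd d (pd true F) z) (Cmul Ci (pd d (pd false F) z)))).
  { intros d. unfold wdbar. apply pd_val. eapply has_pd_eq.
    apply has_pd_mul; [apply has_pd_const | apply has_pd_add; [apply spec; auto |
      apply has_pd_mul; [apply has_pd_const | apply spec; auto]]].
    cbv beta; ring. }
  change (Cmul (CR (/2)) (Cadd (pd true (wd F) z) (Cmul Ci (pd false (wd F) z))) = Cmul (CR (/2)) (Csub (pd true (wdbar F) z) (Cmul Ci (pd false (wdbar F) z)))). rewrite !E1, !E2, C. ring.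
Qed.

Lemma Csum_lin4 n k1 k2 k3 k4 F G H I :
  Csum n (fun i => Cadd (Cadd (Cmul k1 (F i)) (Cmul k2 (G i))) (Cadd (Cmul k3 (H i)) (Cmul k4 (I i)))) =
  Cadd (Cadd (Cmul k1 (Csum n F)) (Cmul k2 (Csum n G))) (Cadd (Cmul k3 (Csum n H)) (Cmul k4 (Csum n I))).
Proof. rewrite !Csum_add, !Csum_scal. reflexivity. Qed.

Lemma Csum_lin5 n k1 k2 k3 k4 k5 F G H I J :
  Csum n (fun i => Cadd (Cadd (Cadd (Cmul k1 (F i)) (Cmul k2 (G i))) (Cadd (Cmul k3 (H i)) (Cmul k4 (I i)))) (Cmul k5 (J i))) =
  Cadd (Cadd (Cadd (Cmul k1 (Csum n F)) (Cmul k2 (Csum n G))) (Cadd (Cmul k3 (Csum n H)) (Cmul k4 (Csum n I)))) (Cmul k5 (Csum n J)).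
Proof. rewrite !Csum_add, !Csum_scal. reflexivity. Qed.

Lemma wd_localU U A B z : is_open U -> (forall w, U w -> A w = B w) -> U z -> wd A z = wd B z.
Proof. intros HU E Hz. unfold wd. rewrite !(pd_local U _ A B z HU E Hz). reflexivity. Qed.
Lemma wdbar_localU U A B z : is_open U -> (forall w, U w -> A w = B w) -> U z -> wdbar A z = wdbar B z.
Proof. intros HU E Hz. unfold wdbar. rewrite !(pd_local U _ A B z HU E Hz). reflexivity. Qed.

Section Harm.
Variable N : nat.
Variable U : Cx -> Prop.
Variable f : Cx -> Vec.
Variable k : nat.
Hypothesis HU : is_open U.
Hypothesis Hhol : holomorphic_on N U f.
Hypothesis Hnz : forall j, (j <= k)%nat -> nowhere_zero_on N U (fj N f j).

Definition Fc j c := fun z => fj N f j z c.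
Definition nrm j z := inner N (fj N f j z) (fj N f j z).
Definition alpha j z := Cdiv (inner N (fj N f j z) (fun b => wd (Fc j b) z)) (nrm j z).
Definition prev j z c := match j with O => C0 | S i => fj N f i z c end.
Definition beta j z := match j with O => C0 | S i => Cdiv (nrm (S i) z) (nrm i z) end.

Lemma fjS j z a : fj N f (S j) z a = Csub (wd (Fc j a) z) (Cmul (fj N f j z a) (alpha j z)).
Proof. reflexivity. Qed.

Lemma nrm_nz j z : (j <= k)%nat -> U z -> nrm j z <> C0.
Proof. intros Hj Hz. destruct (Hnz j Hj z Hz) as [a [Ha Hfa]]. apply inner_nz with a; auto. Qed.

Lemma K_f j c : (j <= k)%nat -> (c < N)%nat -> Kinf U (Fc j c).
Proof.
  revert c. induction j; intros c Hj Hc.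
  - apply Kinf_base; auto. destruct Hhol as [Hs _]. apply Hs; auto.
  - assert (IH : forall b, (b < N)%nat -> Kinf U (Fc j b)) by (intros; apply IHj; auto; lia).
    change (Kinf U (fun z => Csub (wd (Fc j c) z) (Cmul (Fc j c z) (alpha j z)))).
    apply Kinf_sub; auto. apply Kinf_wd; auto.
    apply Kinf_mul; auto. unfold alpha. apply Kinf_div; auto.
    + intros; apply nrm_nz; auto; lia.
    + unfold inner. apply (Kinf_sum U HU N (fun b w => Cmul (Cconj (Fc j b w)) (wd (Fc j b) w))).
      intros; apply Kinf_mul; auto. apply Kinf_conj; auto. apply Kinf_wd; auto.
    + unfold nrm, inner. apply (Kinf_sum U HU N (fun b w => Cmul (Cconj (Fc j b w)) (Fc j b w))).
      intros; apply Kinf_mul; auto. apply Kinf_conj; auto.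
Qed.

Lemma K_nrm j : (j <= k)%nat -> Kinf U (nrm j).
Proof.
  intros Hj. unfold nrm, inner. apply (Kinf_sum U HU N (fun b w => Cmul (Cconj (Fc j b w)) (Fc j b w))).
  intros; apply Kinf_mul; auto using K_f. apply Kinf_conj; auto using K_f.
Qed.

Lemma K_alpha j : (j <= k)%nat -> Kinf U (alpha j).
Proof.
  intros Hj. unfold alpha. apply Kinf_div; auto.
  + intros; apply nrm_nz; auto.
  + unfold inner. apply (Kinf_sum U HU N (fun b w => Cmul (Cconj (Fc j b w)) (wd (Fc j b) w))).
    intros; apply Kinf_mul; auto using K_f. apply Kinf_conj; auto using K_f. apply Kinf_wd; auto using K_f.
  + apply K_nrm; auto.
Qed.

Lemma nrm_conj j z : Cconj (nrm j z) = nrm j z.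
Proof. apply Cconj_inner_self. Qed.

Lemma orth j z : (j <= k)%nat -> U z -> inner N (fj N f j z) (fj N f (S j) z) = C0.
Proof.
  intros Hj Hz. pose proof (nrm_nz j z Hj Hz) as Hn.
  unfold inner. transitivity (Csum N (fun c => Cadd (Cmul (CR 1) (Cmul (Cconj (fj N f j z c)) (wd (Fc j c) z)))
      (Cmul (Copp (alpha j z)) (Cmul (Cconj (fj N f j z c)) (fj N f j z c))))).
  { apply Csum_ext; intros. rewrite fjS. ring. }
  rewrite Csum_lin2. fold (inner N (fj N f j z) (fun b => wd (Fc j b) z)).
  fold (inner N (fj N f j z) (fj N f j z)). fold (nrm j z). unfold alpha. field. auto.
Qed.

Lemma orth' j z : (j <= k)%nat -> U z -> inner N (fj N f (S j) z) (fj N f j z) = C0.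
Proof. intros. rewrite <- inner_conj, orth; auto. cx; ring. Qed.

Lemma orthp j z : (j <= k)%nat -> U z -> inner N (fun c => prev j z c) (fj N f j z) = C0.
Proof.
  intros Hj Hz. destruct j; simpl.
  - unfold inner. transitivity (Csum N (fun _ => C0)); [|apply Csum_zero]. apply Csum_ext; intros. rewrite Cconj_C0. ring.
  - apply orth; auto; lia.
Qed.
Lemma orthp' j z : (j <= k)%nat -> U z -> inner N (fj N f j z) (fun c => prev j z c) = C0.
Proof. intros. rewrite <- inner_conj, orthp; auto. cx; ring. Qed.


Ltac kinf := repeat first [ apply (Kinf_wd U HU) | apply (Kinf_wdbar U HU) | apply (Kinf_const U) | apply (Kinf_add U HU) | apply (Kinf_mul U HU) | apply (Kinf_sub U HU)
  | apply (Kinf_opp U HU) | apply (Kinf_conj U HU) | apply (Kinf_inv U HU) | apply (Kinf_div U HU)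
  | apply K_f | apply K_nrm | apply K_alpha
  | (apply (Kinf_sum U HU); intros)
  | (intros; apply nrm_nz) | assumption | lia ].
Ltac d1 := apply Kinf_D1 with U; [kinf | assumption].

Lemma Wd j z c : wd (Fc j c) z = Cadd (fj N f (S j) z c) (Cmul (fj N f j z c) (alpha j z)).
Proof. rewrite fjS. ring. Qed.

Definition Bst j := forall z c, U z -> (c < N)%nat -> wdbar (Fc j c) z = Copp (Cmul (prev j z c) (beta j z)).

Lemma nrm_wd j z : (j <= k)%nat -> U z -> Bst j ->
  wd (nrm j) z = Cmul (alpha j z) (nrm j z) /\ wdbar (nrm j) z = Cmul (Cconj (alpha j z)) (nrm j z).
Proof.
  intros Hj Hz HB.
  change (wd (nrm j) z) with (wd (fun w => Csum N (fun b => (fun b w => Cmul (Cconj (Fc j b w)) (Fc j b w)) b w)) z).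
  change (wdbar (nrm j) z) with (wdbar (fun w => Csum N (fun b => (fun b w => Cmul (Cconj (Fc j b w)) (Fc j b w)) b w)) z).
  rewrite (wd_sum U N _ z HU Hz) by (intros; kinf). rewrite (wdbar_sum U N _ z HU Hz) by (intros; kinf).
  split.
  - transitivity (Csum N (fun b => Cadd (Cadd (Cmul (Copp (Cconj (beta j z))) (Cmul (Cconj (prev j z b)) (fj N f j z b)))
        (Cmul (CR 1) (Cmul (Cconj (fj N f j z b)) (fj N f (S j) z b))))
        (Cadd (Cmul (alpha j z) (Cmul (Cconj (fj N f j z b)) (fj N f j z b))) (Cmul C0 C0)))).
    { apply Csum_ext; intros b Hb. cbv beta. rewrite wd_mul by d1. rewrite wd_conj by d1.
      rewrite HB by auto. rewrite Wd. unfold Fc. autorewrite with cconj. ring. }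
    rewrite Csum_lin4. fold (inner N (fun c => prev j z c) (fj N f j z)).
    fold (inner N (fj N f j z) (fj N f (S j) z)). fold (inner N (fj N f j z) (fj N f j z)).
    rewrite (orthp j z), (orth j z) by auto. fold (nrm j z). ring.
  - transitivity (Csum N (fun b => Cadd (Cadd (Cmul (CR 1) (Cmul (Cconj (fj N f (S j) z b)) (fj N f j z b)))
        (Cmul (Cconj (alpha j z)) (Cmul (Cconj (fj N f j z b)) (fj N f j z b))))
        (Cadd (Cmul (Copp (beta j z)) (Cmul (Cconj (fj N f j z b)) (prev j z b))) (Cmul C0 C0)))).
    { apply Csum_ext; intros b Hb. cbv beta. rewrite wdbar_mul by d1. rewrite wdbar_conj by d1.
      rewrite HB by auto. rewrite Wd. unfold Fc. autorewrite with cconj. ring. }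
    rewrite Csum_lin4. fold (inner N (fj N f j z) (fun c => prev j z c)).
    fold (inner N (fj N f (S j) z) (fj N f j z)). fold (inner N (fj N f j z) (fj N f j z)).
    rewrite (orthp' j z), (orth' j z) by auto. fold (nrm j z). ring.
Qed.

Lemma Ej j z c : (j <= k)%nat -> U z -> (c < N)%nat -> (forall i, (i <= j)%nat -> Bst i) ->
  wdbar (wd (Fc j c)) z = Copp (Cmul (beta j z) (Cadd (fj N f j z c) (Cmul (prev j z c) (alpha j z)))).
Proof.
  intros Hj Hz Hc HB.
  rewrite (comm_wd U (Fc j c) z) by (auto; apply K_f; auto).
  rewrite (wd_localU U (wdbar (Fc j c)) (fun w => Copp (Cmul (prev j w c) (beta j w))) z HU)
    by (auto; intros; apply HB; auto).
  destruct j as [|j].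
  - cbn [prev beta]. rewrite wd_const. ring.
  - cbn [prev beta]. unfold Cdiv.
    assert (Hn1 : nrm j z <> C0) by (apply nrm_nz; auto; lia).
    assert (Hn2 : nrm (S j) z <> C0) by (apply nrm_nz; auto; lia).
    rewrite wd_opp by d1. rewrite wd_mul by d1. rewrite wd_mul by d1. rewrite wd_inv by (auto; d1).
    change (wd (fun w : Cx => fj N f j w c) z) with (wd (Fc j c) z). rewrite (Wd j z c).
    destruct (nrm_wd (S j) z) as [E1 _]; auto. destruct (nrm_wd j z) as [E2 _]; auto; try lia.
    rewrite E1, E2. field. auto.
Qed.

Lemma alphaX j z : (j <= k)%nat -> U z ->
  inner N (fj N f j z) (fun b => wd (Fc j b) z) = Cmul (alpha j z) (nrm j z).
Proof. intros. unfold alpha. field. apply nrm_nz; auto. Qed.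

Lemma wdbar_alpha j z : (j <= k)%nat -> U z -> (forall i, (i <= j)%nat -> Bst i) ->
  wdbar (alpha j) z = Csub (Cdiv (nrm (S j) z) (nrm j z)) (beta j z).
Proof.
  intros Hj Hz HB.
  assert (Hn : nrm j z <> C0) by (apply nrm_nz; auto).
  change (wdbar (alpha j) z) with (wdbar (fun w => Cmul (Csum N (fun b => (fun b w => Cmul (Cconj (Fc j b w)) (wd (Fc j b) w)) b w)) (Cinv (nrm j w))) z).
  rewrite wdbar_mul; [| d1 | d1].
  rewrite wdbar_inv by (auto; d1).
  rewrite (wdbar_sum U N _ z HU Hz) by (intros; kinf).
  destruct (nrm_wd j z) as [_ E2]; auto. rewrite E2.
  transitivity (Cadd (Cmul (Csum N (fun b => Cadd (Cadd (Cadd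
       (Cmul (CR 1) (Cmul (Cconj (fj N f (S j) z b)) (fj N f (S j) z b)))
       (Cmul (alpha j z) (Cmul (Cconj (fj N f (S j) z b)) (fj N f j z b))))
      (Cadd (Cmul (Cconj (alpha j z)) (Cmul (Cconj (fj N f j z b)) (fj N f (S j) z b)))
       (Cmul (Csub (Cmul (Cconj (alpha j z)) (alpha j z)) (beta j z)) (Cmul (Cconj (fj N f j z b)) (fj N f j z b)))))
      (Cmul (Copp (Cmul (beta j z) (alpha j z))) (Cmul (Cconj (fj N f j z b)) (prev j z b)))))
     (Cinv (nrm j z)))
    (Cmul (Cmul (alpha j z) (nrm j z)) (Copp (Cmul (Cmul (Cconj (alpha j z)) (nrm j z)) (Cmul (Cinv (nrm j z)) (Cinv (nrm j z))))))).
  { f_equal.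
    - f_equal. apply Csum_ext; intros b Hb. cbv beta.
      rewrite wdbar_mul by d1. rewrite wdbar_conj by d1. rewrite Ej by auto. rewrite Wd.
      unfold Fc. autorewrite with cconj. ring.
    - f_equal. change (Csum N (fun b => Cmul (Cconj (Fc j b z)) (wd (Fc j b) z))) with
        (inner N (fj N f j z) (fun b => wd (Fc j b) z)). apply alphaX; auto. }
  rewrite Csum_lin5.
  fold (inner N (fj N f (S j) z) (fj N f (S j) z)). fold (inner N (fj N f (S j) z) (fj N f j z)).
  fold (inner N (fj N f j z) (fj N f (S j) z)). fold (inner N (fj N f j z) (fj N f j z)).
  fold (inner N (fj N f j z) (fun c => prev j z c)).
  rewrite (orthp' j z), (orth' j z), (orth j z) by auto. fold (nrm j z). fold (nrm (S j) z).
  field. auto.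
Qed.

Lemma B_step j : (S j <= k)%nat -> (forall i, (i <= j)%nat -> Bst i) -> Bst (S j).
Proof.
  intros Hj HB z c Hz Hc.
  assert (Hn : nrm j z <> C0) by (apply nrm_nz; auto; lia).
  change (wdbar (Fc (S j) c) z) with (wdbar (fun w => Csub (wd (Fc j c) w) (Cmul (Fc j c w) (alpha j w))) z).
  rewrite wdbar_sub by d1. rewrite wdbar_mul by d1.
  change (wdbar (fun w => Fc j c w) z) with (wdbar (Fc j c) z).
  change (wdbar (fun w => wd (Fc j c) w) z) with (wdbar (wd (Fc j c)) z).
  change (wdbar (fun w => alpha j w) z) with (wdbar (alpha j) z).
  rewrite Ej by (auto; lia). rewrite (HB j) by auto. rewrite wdbar_alpha by (auto; lia).
  cbn [prev beta]. unfold Fc. field. auto.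
Qed.

Lemma B_all j : (j <= k)%nat -> Bst j.
Proof.
  intros Hj. assert (H : forall j, (j <= k)%nat -> forall i, (i <= j)%nat -> Bst i).
  { clear j Hj. induction j; intros Hj i Hi.
    - assert (i = 0%nat) by lia. subst. intros z c Hz Hc. cbn [prev beta].
      destruct Hhol as [_ H0]. unfold Fc. rewrite H0 by auto. ring.
    - destruct (Nat.eq_dec i (S j)).
      + subst. apply B_step; auto. apply IHj. lia.
      + apply IHj; lia. }
  apply (H j Hj j); auto.
Qed.

Definition Aj j z a b := Cdiv (Cmul (fj N f (S j) z a) (Cconj (fj N f j z b))) (nrm j z).
Definition Ap j z a b := match j with O => C0 | S i => Aj i z a b end.

Lemma Pj_eq j w a b : Pj N f j w a b = Cmul (Cmul (Fc j a w) (Cconj (Fc j b w))) (Cinv (nrm j w)).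
Proof. reflexivity. Qed.

Lemma K_P j a b : (j <= k)%nat -> (a < N)%nat -> (b < N)%nat -> Kinf U (fun w => Pj N f j w a b).
Proof. intros. change (Kinf U (fun w => Cmul (Cmul (Fc j a w) (Cconj (Fc j b w))) (Cinv (nrm j w)))). kinf. Qed.

Lemma P_wd j z a b : (j <= k)%nat -> U z -> (a < N)%nat -> (b < N)%nat ->
  wd (fun w => Pj N f j w a b) z = Csub (Aj j z a b) (Ap j z a b).
Proof.
  intros Hj Hz Ha Hb. assert (Hn : nrm j z <> C0) by (apply nrm_nz; auto).
  change (wd (fun w => Pj N f j w a b) z) with
    (wd (fun w => Cmul (Cmul (Fc j a w) (Cconj (Fc j b w))) (Cinv (nrm j w))) z).
  rewrite wd_mul by d1. rewrite wd_mul by d1. rewrite wd_inv by (auto; d1). rewrite wd_conj by d1.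
  change (wd (fun w => Fc j a w) z) with (wd (Fc j a) z).
  change (wdbar (fun w => Fc j b w) z) with (wdbar (Fc j b) z).
  change (wd (fun w => nrm j w) z) with (wd (nrm j) z).
  rewrite (Wd j z a). rewrite (B_all j Hj z b Hz Hb).
  destruct (nrm_wd j z) as [E1 _]; auto. apply B_all; auto. rewrite E1.
  unfold Aj, Ap, Fc. destruct j as [|i]; cbn [prev beta].
  - autorewrite with cconj. field. auto.
  - assert (Hm : nrm i z <> C0) by (apply nrm_nz; auto; lia). unfold Aj.
    autorewrite with cconj. rewrite !nrm_conj. field. auto.
Qed.

Lemma P_wdbar j z a b : (j <= k)%nat -> U z -> (a < N)%nat -> (b < N)%nat ->
  wdbar (fun w => Pj N f j w a b) z = Csub (Cconj (Aj j z b a)) (Cconj (Ap j z b a)).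
Proof.
  intros Hj Hz Ha Hb. assert (Hn : nrm j z <> C0) by (apply nrm_nz; auto).
  change (wdbar (fun w => Pj N f j w a b) z) with
    (wdbar (fun w => Cmul (Cmul (Fc j a w) (Cconj (Fc j b w))) (Cinv (nrm j w))) z).
  rewrite wdbar_mul by d1. rewrite wdbar_mul by d1. rewrite wdbar_inv by (auto; d1). rewrite wdbar_conj by d1.
  change (wdbar (fun w => Fc j a w) z) with (wdbar (Fc j a) z).
  change (wd (fun w => Fc j b w) z) with (wd (Fc j b) z).
  change (wdbar (fun w => nrm j w) z) with (wdbar (nrm j) z).
  rewrite (Wd j z b). rewrite (B_all j Hj z a Hz Ha).
  destruct (nrm_wd j z) as [_ E1]; auto. apply B_all; auto. rewrite E1.
  unfold Aj, Ap, Fc. destruct j as [|i]; cbn [prev beta].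
  - autorewrite with cconj. rewrite !nrm_conj. field. auto.
  - assert (Hm : nrm i z <> C0) by (apply nrm_nz; auto; lia). unfold Aj.
    autorewrite with cconj. rewrite !nrm_conj. field. auto.
Qed.

Lemma comm_d j z a b : (j <= k)%nat -> U z -> (a < N)%nat -> (b < N)%nat ->
  comm N (mwd (Pj N f j) z) (Pj N f j z) a b = Cadd (Aj j z a b) (Ap j z a b).
Proof.
  intros Hj Hz Ha Hb. assert (Hn : nrm j z <> C0) by (apply nrm_nz; auto).
  unfold comm, mmul, mwd.
  destruct j as [|i].
  - transitivity (Csub (Csum N (fun c => Cadd (Cmul (Cdiv (Cmul (fj N f 1 z a) (Cconj (fj N f 0 z b))) (Cmul (nrm 0 z) (nrm 0 z)))
                                                  (Cmul (Cconj (fj N f 0 z c)) (fj N f 0 z c))) (Cmul C0 C0)))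
                       (Csum N (fun c => Cadd (Cmul (Cdiv (Cmul (fj N f 0 z a) (Cconj (fj N f 0 z b))) (Cmul (nrm 0 z) (nrm 0 z)))
                                                  (Cmul (Cconj (fj N f 0 z c)) (fj N f 1 z c))) (Cmul C0 C0)))).
    { f_equal; apply Csum_ext; intros c Hc; rewrite P_wd by auto; unfold Ap, Aj; rewrite !Pj_eq; unfold Fc;
      field; auto. }
    rewrite !Csum_lin2. fold (inner N (fj N f 0 z) (fj N f 0 z)). fold (inner N (fj N f 0 z) (fj N f 1 z)).
    rewrite (orth 0 z) by auto. fold (nrm 0 z). unfold Ap, Aj. field. auto.
  - assert (Hm : nrm i z <> C0) by (apply nrm_nz; auto; lia).
    transitivity (Csub (Csum N (fun c => Cadd (Cmul (Cdiv (Cmul (fj N f (S (S i)) z a) (Cconj (fj N f (S i) z b))) (Cmul (nrm (S i) z) (nrm (S i) z)))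
                                                  (Cmul (Cconj (fj N f (S i) z c)) (fj N f (S i) z c)))
                                           (Cmul (Copp (Cdiv (Cmul (fj N f (S i) z a) (Cconj (fj N f (S i) z b))) (Cmul (nrm i z) (nrm (S i) z))))
                                                  (Cmul (Cconj (fj N f i z c)) (fj N f (S i) z c)))))
                       (Csum N (fun c => Cadd (Cmul (Cdiv (Cmul (fj N f (S i) z a) (Cconj (fj N f (S i) z b))) (Cmul (nrm (S i) z) (nrm (S i) z)))
                                                  (Cmul (Cconj (fj N f (S i) z c)) (fj N f (S (S i)) z c)))
                                           (Cmul (Copp (Cdiv (Cmul (fj N f (S i) z a) (Cconj (fj N f i z b))) (Cmul (nrm (S i) z) (nrm i z))))
                                                  (Cmul (Cconj (fj N f (S i) z c)) (fj N f (S i) z c)))))).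
    { f_equal; apply Csum_ext; intros c Hc; rewrite P_wd by auto; unfold Ap, Aj; rewrite !Pj_eq; unfold Fc;
      field; auto. }
    rewrite !Csum_lin2. fold (inner N (fj N f (S i) z) (fj N f (S i) z)).
    fold (inner N (fj N f (S i) z) (fj N f (S (S i)) z)). fold (inner N (fj N f i z) (fj N f (S i) z)).
    rewrite (orth (S i) z), (orth i z) by (auto; lia). fold (nrm (S i) z). unfold Ap, Aj. field. auto.
Qed.

Lemma comm_dbar j z a b : (j <= k)%nat -> U z -> (a < N)%nat -> (b < N)%nat ->
  comm N (mwdbar (Pj N f j) z) (Pj N f j z) a b = Copp (Cadd (Cconj (Aj j z b a)) (Cconj (Ap j z b a))).
Proof.
  intros Hj Hz Ha Hb. assert (Hn : nrm j z <> C0) by (apply nrm_nz; auto).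
  unfold comm, mmul, mwdbar.
  destruct j as [|i].
  - transitivity (Csub (Csum N (fun c => Cadd (Cmul (Cdiv (Cmul (fj N f 0 z a) (Cconj (fj N f 0 z b))) (Cmul (nrm 0 z) (nrm 0 z)))
                                                  (Cmul (Cconj (fj N f 1 z c)) (fj N f 0 z c))) (Cmul C0 C0)))
                       (Csum N (fun c => Cadd (Cmul (Cdiv (Cmul (fj N f 0 z a) (Cconj (fj N f 1 z b))) (Cmul (nrm 0 z) (nrm 0 z)))
                                                  (Cmul (Cconj (fj N f 0 z c)) (fj N f 0 z c))) (Cmul C0 C0)))).
    { f_equal; apply Csum_ext; intros c Hc; rewrite P_wdbar by auto; unfold Ap, Aj; rewrite !Pj_eq; unfold Fc;
      autorewrite with cconj; rewrite !nrm_conj; field; auto. }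
    rewrite !Csum_lin2. fold (inner N (fj N f 0 z) (fj N f 0 z)). fold (inner N (fj N f 1 z) (fj N f 0 z)).
    rewrite (orth' 0 z) by auto. fold (nrm 0 z). unfold Ap, Aj. autorewrite with cconj; rewrite !nrm_conj. field. auto.
  - assert (Hm : nrm i z <> C0) by (apply nrm_nz; auto; lia).
    transitivity (Csub (Csum N (fun c => Cadd (Cmul (Cdiv (Cmul (fj N f (S i) z a) (Cconj (fj N f (S i) z b))) (Cmul (nrm (S i) z) (nrm (S i) z)))
                                                  (Cmul (Cconj (fj N f (S (S i)) z c)) (fj N f (S i) z c)))
                                           (Cmul (Copp (Cdiv (Cmul (fj N f i z a) (Cconj (fj N f (S i) z b))) (Cmul (nrm i z) (nrm (S i) z))))
                                                  (Cmul (Cconj (fj N f (S i) z c)) (fj N f (S i) z c)))))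
                       (Csum N (fun c => Cadd (Cmul (Cdiv (Cmul (fj N f (S i) z a) (Cconj (fj N f (S (S i)) z b))) (Cmul (nrm (S i) z) (nrm (S i) z)))
                                                  (Cmul (Cconj (fj N f (S i) z c)) (fj N f (S i) z c)))
                                           (Cmul (Copp (Cdiv (Cmul (fj N f (S i) z a) (Cconj (fj N f (S i) z b))) (Cmul (nrm (S i) z) (nrm i z))))
                                                  (Cmul (Cconj (fj N f (S i) z c)) (fj N f i z c)))))).
    { f_equal; apply Csum_ext; intros c Hc; rewrite P_wdbar by auto; unfold Ap, Aj; rewrite !Pj_eq; unfold Fc;
      autorewrite with cconj; rewrite !nrm_conj; field; auto. }
    rewrite !Csum_lin2. fold (inner N (fj N f (S i) z) (fj N f (S i) z)).
    fold (inner N (fj N f (S (S i)) z) (fj N f (S i) z)). fold (inner N (fj N f (S i) z) (fj N f i z)).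
    rewrite (orth' (S i) z), (orth' i z) by (auto; lia). fold (nrm (S i) z). unfold Ap, Aj.
    autorewrite with cconj; rewrite !nrm_conj. field. auto.
Qed.

Lemma tele j z a b : Csum j (fun i => Csub (Aj i z a b) (Ap i z a b)) = Ap j z a b.
Proof. induction j; simpl. reflexivity. rewrite IHj. destruct j; simpl; ring. Qed.

Ltac kinf2 := repeat first [apply K_P | (apply (Kinf_sum U HU); intros) | apply (Kinf_const U)
  | apply (Kinf_add U HU) | apply (Kinf_mul U HU) | assumption | lia].

Lemma CR2 : CR 2 = Cadd (CR 1) (CR 1).
Proof. cx; ring. Qed.

Lemma K_Phi a b : (a < N)%nat -> (b < N)%nat -> Kinf U (fun w => Phi N f k w a b).
Proof. intros. unfold Phi. kinf2. Qed.

Lemma Phi_wd z a b : U z -> (a < N)%nat -> (b < N)%nat ->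
  wd (fun w => Phi N f k w a b) z = Cmul (Copp Ci) (Cadd (Aj k z a b) (Ap k z a b)).
Proof.
  intros Hz Ha Hb. unfold Phi.
  rewrite wd_mul by (apply Kinf_D1 with U; [kinf2|auto]). rewrite wd_const.
  rewrite wd_add by (apply Kinf_D1 with U; [kinf2|auto]).
  rewrite wd_mul by (apply Kinf_D1 with U; [kinf2|auto]). rewrite wd_const.
  rewrite (wd_sum U k (fun j w => Pj N f j w a b) z HU Hz) by (intros; apply K_P; auto; lia).
  rewrite P_wd by auto.
  rewrite (Csum_ext k (fun i => wd (fun w => Pj N f i w a b) z) (fun i => Csub (Aj i z a b) (Ap i z a b))) by (intros; apply P_wd; auto; lia).
  rewrite tele. rewrite CR2. ring.
Qed.

Lemma Phi_wdbar z a b : U z -> (a < N)%nat -> (b < N)%nat ->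
  wdbar (fun w => Phi N f k w a b) z = Cmul (Copp Ci) (Cadd (Cconj (Aj k z b a)) (Cconj (Ap k z b a))).
Proof.
  intros Hz Ha Hb. unfold Phi.
  rewrite wdbar_mul by (apply Kinf_D1 with U; [kinf2|auto]). rewrite wdbar_const.
  rewrite wdbar_add by (apply Kinf_D1 with U; [kinf2|auto]).
  rewrite wdbar_mul by (apply Kinf_D1 with U; [kinf2|auto]). rewrite wdbar_const.
  rewrite (wdbar_sum U k (fun j w => Pj N f j w a b) z HU Hz) by (intros; apply K_P; auto; lia).
  rewrite P_wdbar by auto.
  rewrite (Csum_ext k (fun i => wdbar (fun w => Pj N f i w a b) z) (fun i => Csub (Cconj (Aj i z b a)) (Cconj (Ap i z b a)))) by (intros; apply P_wdbar; auto; lia).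
  assert (T : Csum k (fun i => Csub (Cconj (Aj i z b a)) (Cconj (Ap i z b a))) = Cconj (Ap k z b a)).
  { rewrite <- tele, Csum_conj. apply Csum_ext; intros; autorewrite with cconj; reflexivity. }
  rewrite T. rewrite CR2. ring.
Qed.

Lemma part1 : (k <= k)%nat -> is_d_of N U (Phi N f k) (omega_dxi N f k) (omega_dxibar N f k).
Proof.
  intros _ z a b Hz Ha Hb.
  pose proof (Kinf_D1 U _ z (K_Phi a b Ha Hb) Hz) as HD.
  exists (pd true (fun w => Phi N f k w a b) z), (pd false (fun w => Phi N f k w a b) z).
  split; [exact (spec _ _ _ (HD true))|]. split; [exact (spec _ _ _ (HD false))|]. split.
  - change (omega_dxi N f k z a b = wd (fun w => Phi N f k w a b) z).
    rewrite Phi_wd by auto. unfold omega_dxi. rewrite comm_d by auto. ring.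
  - change (omega_dxibar N f k z a b = wdbar (fun w => Phi N f k w a b) z).
    rewrite Phi_wdbar by auto. unfold omega_dxibar. rewrite comm_dbar by auto. ring.
Qed.

End Harm.

Lemma const_seg (g : R -> R) a b : (forall c, Rmin a b <= c <= Rmax a b -> derivable_pt_lim g c 0) -> g a = g b.
Proof.
  intros H. destruct (Rtotal_order a b) as [Hab|[Hab|Hab]].
  - destruct (MVT_cor2 g (fun _ => 0) a b Hab) as [c [E _]].
    { intros c Hc. apply H. rewrite Rmin_left, Rmax_right by lra. lra. }
    lra.
  - subst; reflexivity.
  - destruct (MVT_cor2 g (fun _ => 0) b a Hab) as [c [E _]].
    { intros c Hc. apply H. rewrite Rmin_right, Rmax_left by lra. lra. }
    lra.
Qed.

Lemma loc_const U D x y : is_open U -> U (mkC x y) ->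
  (forall z, U z -> has_pd true D z C0 /\ has_pd false D z C0) ->
  exists r, 0 < r /\ forall s t, Rabs (s - x) < r -> Rabs (t - y) < r -> U (mkC s t) /\ D (mkC s t) = D (mkC x y).
Proof.
  intros HU Hz HD. destruct (ball_U U x y HU Hz) as [r [Hr Hb]]. exists r. split; auto.
  intros s t Hs Ht. split; auto.
  assert (Rmm : forall p q u r0, Rabs (p - u) < r0 -> Rabs (q - u) < r0 -> forall c, Rmin p q <= c <= Rmax p q -> Rabs (c - u) < r0).
  { intros p q u r0 Hp Hq c Hc. unfold Rmin, Rmax in Hc.
    apply Rabs_def2 in Hp. apply Rabs_def2 in Hq. apply Rabs_def1; destruct (Rle_dec p q); lra. }
  assert (Hx0 : Rabs (x - x) < r) by (replace (x - x) with 0 by ring; rewrite Rabs_R0; lra).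
  assert (Hy0 : Rabs (y - y) < r) by (replace (y - y) with 0 by ring; rewrite Rabs_R0; lra).
  assert (E1 : D (mkC s y) = D (mkC x y)).
  { apply Ceq.
    - symmetry. apply (const_seg (fun u => re (D (mkC u y)))). intros c Hc.
      destruct (HD (mkC c y)) as [[A _] _]. apply Hb; eauto. exact A.
    - symmetry. apply (const_seg (fun u => im (D (mkC u y)))). intros c Hc.
      destruct (HD (mkC c y)) as [[_ A] _]. apply Hb; eauto. exact A. }
  assert (E2 : D (mkC s t) = D (mkC s y)).
  { apply Ceq.
    - symmetry. apply (const_seg (fun u => re (D (mkC s u)))). intros c Hc.
      destruct (HD (mkC s c)) as [_ [A _]]. apply Hb; eauto. exact A.
    - symmetry. apply (const_seg (fun u => im (D (mkC s u)))). intros c Hc.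
      destruct (HD (mkC s c)) as [_ [_ A]]. apply Hb; eauto. exact A. }
  congruence.
Qed.

Lemma open_by_ball (V : Cx -> Prop) : (forall z, V z -> exists r, 0 < r /\ forall s t,
   Rabs (s - re z) < r -> Rabs (t - im z) < r -> V (mkC s t)) -> is_open V.
Proof.
  intros H z Hz. destruct (H z Hz) as [r [Hr Hb]]. exists r. split; auto.
  intros w Hw. destruct w as [s t].
  pose proof (Cnorm_re (Csub (mkC s t) z)). pose proof (Cnorm_im (Csub (mkC s t) z)).
  simpl in *. apply Hb; unfold Rminus; lra.
Qed.

Lemma const_conn U D z0 : is_open U -> is_connected U -> U z0 ->
  (forall z, U z -> has_pd true D z C0 /\ has_pd false D z C0) ->
  forall z, U z -> D z = D z0.
Proof.
  intros HU HC Hz0 HD z Hz.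
  apply NNPP. intro Hne.
  apply (HC (fun w => U w /\ D w = D z0) (fun w => U w /\ D w <> D z0)).
  - apply open_by_ball. intros [x y] [Hw Ew].
    destruct (loc_const U D x y HU Hw HD) as [r [Hr Hb]]. exists r. split; auto.
    intros s t Hs Ht. destruct (Hb s t Hs Ht). split; congruence.
  - apply open_by_ball. intros [x y] [Hw Ew].
    destruct (loc_const U D x y HU Hw HD) as [r [Hr Hb]]. exists r. split; auto.
    intros s t Hs Ht. destruct (Hb s t Hs Ht). split; congruence.
  - intros w Hw. destruct (classic (D w = D z0)); auto.
  - intros w Hw [_ A] [_ B]. auto.
  - exists z0. auto.
  - exists z. auto.
Qed.

Theorem mainTheorem2 (N : nat) (U : Cx -> Prop) (f : Cx -> Vec) (k : nat) :
  is_open U ->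
  holomorphic_on N U f ->
  nonconstant_on N U f ->
  (k + 2 <= N)%nat ->
  (forall j, (j <= k)%nat -> nowhere_zero_on N U (fj N f j)) ->
  is_d_of N U (Phi N f k) (omega_dxi N f k) (omega_dxibar N f k) /\
  (is_connected U ->
   forall X : Cx -> Mat,
     is_d_of N U X (omega_dxi N f k) (omega_dxibar N f k) ->
     exists M : Mat, forall z a b, U z -> (a < N)%nat -> (b < N)%nat ->
       X z a b = Cadd (Phi N f k z a b) (M a b)).
Proof.
  intros HU Hhol Hnc Hk Hnz.
  pose proof (part1 N U f k HU Hhol Hnz (le_n k)) as P1.
  split; auto.
  intros HC X HX.
  destruct Hnc as [z0 [_ [_ [Hz0 _]]]].
  exists (fun a b => Csub (X z0 a b) (Phi N f k z0 a b)).
  intros z a b Hz Ha Hb.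
  assert (HD : forall w, U w -> has_pd true (fun w => Csub (X w a b) (Phi N f k w a b)) w C0 /\
                              has_pd false (fun w => Csub (X w a b) (Phi N f k w a b)) w C0).
  { intros w Hw.
    destruct (HX w a b Hw Ha Hb) as [lx [ly [A1 [A2 [A3 A4]]]]].
    destruct (P1 w a b Hw Ha Hb) as [lx' [ly' [B1 [B2 [B3 B4]]]]].
    assert (Ex : lx = lx').
    { assert (Cadd (Cmul (CR (/ 2)) (Csub lx (Cmul Ci ly))) (Cmul (CR (/ 2)) (Cadd lx (Cmul Ci ly))) =
              Cadd (Cmul (CR (/ 2)) (Csub lx' (Cmul Ci ly'))) (Cmul (CR (/ 2)) (Cadd lx' (Cmul Ci ly')))) by congruence.
      destruct lx, ly, lx', ly'. injection H; intros. apply Ceq; simpl in *; lra. }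
    assert (Ey : ly = ly').
    { assert (Csub (Cmul (CR (/ 2)) (Cadd lx (Cmul Ci ly))) (Cmul (CR (/ 2)) (Csub lx (Cmul Ci ly))) =
              Csub (Cmul (CR (/ 2)) (Cadd lx' (Cmul Ci ly'))) (Cmul (CR (/ 2)) (Csub lx' (Cmul Ci ly')))) by congruence.
      destruct lx, ly, lx', ly'. injection H; intros. apply Ceq; simpl in *; lra. }
    subst lx' ly'. split.
    - eapply has_pd_eq. apply has_pd_sub; [exact A1 | exact B1]. cx; ring.
    - eapply has_pd_eq. apply has_pd_sub; [exact A2 | exact B2]. cx; ring.
  }
  pose proof (const_conn U _ z0 HU HC Hz0 HD z Hz) as E. cbv beta in E.
  rewrite <- E. ring.
Qed.
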